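(* Let $\mathcal X,\mathcal Y$ be nonempty convex compact sets and $\mathcal L:\mathcal X\times\mathcal Y\to\mathbb R$ a differentiable, uniformly strongly convex-concave function with saddle point $(x^*,y^* )$, and let $z=(x,y)\in\mathcal X\times\mathcal Y$. (I) If $(x^*,y^* )$ lies in the relative interior of $\mathcal X\times\mathcal Y$ and $\mu^{int}_{\mathcal L}>0$ (with reference point $(x^*,y^* )$), then $w(z)\le\frac{(g^{FW}(z))^2}{2\mu^{int}_{\mathcal L}}$. (P) If $\mathcal X=\mathrm{conv}(\mathcal A)$, $\mathcal Y=\mathrm{conv}(\mathcal B)$ with $\mathcal A,\mathcal B$ finite and $\mu^A_{\mathcal L}>0$, then for any active set expansion of $z$, $w(z)\le h(z)\le\frac{(g^{PFW}(z))^2}{2\mu^A_{\mathcal L}}$, where $g^{PFW}(z)$ is computed with respect to that expansion.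
   Context: Convex-concave: $\mathcal L(\cdot,y)$ convex, $\mathcal L(x,\cdot)$ concave. Uniformly strongly convex-concave: there are $\mu_{\mathcal X},\mu_{\mathcal Y}>0$ with $\mathcal L(\cdot,y)$ $\mu_{\mathcal X}$-strongly convex for every $y$ and $-\mathcal L(x,\cdot)$ $\mu_{\mathcal Y}$-strongly convex for every $x$. Saddle point: $\mathcal L(x^*,y)\le\mathcal L(x^*,y^* )\le\mathcal L(x,y^* )$ for all $x,y$. For $z=(x,y)$: $r(z):=(\nabla_x\mathcal L(z),-\nabla_y\mathcal L(z))$, $h(z):=\max_{y'}\mathcal L(x,y')-\min_{x'}\mathcal L(x',y)$, $w(z):=\mathcal L(x,y^* )-\mathcal L(x^*,y)$, $s(z)\in\arg\min_{s\in\mathcal X\times\mathcal Y}\langle s,r(z)\rangle$, $g^{FW}(z):=\langle z-s(z),r(z)\rangle$. Active set expansion: weights $\alpha>0$ on $S_x\subseteq\mathcal A$ and on $S_y\subseteq\mathcal B$, each summing to one, with $x=\sum_{v\in S_x}\alpha_vv$, $y=\sum_{v\in S_y}\alpha_vv$; then $v\in\arg\max_{v\in S_x\times S_y}\langle r(z),v\rangle$ and $g^{PFW}(z):=\langle v-s(z),r(z)\rangle$. $\mathcal F:=\{\mathcal L(\cdot,y):y\in\mathcal Y\}$, $\mathcal G:=\{-\mathcal L(x,\cdot):x\in\mathcal X\}$. Interior strong convexity of $f$ on $\mathcal K$ w.r.t. $x_c$ in its relative interior: $\mu_f^{x_c}:=\inf\frac2{\gamma^2}(f(u)-f(x)-\langle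 u-x,\nabla f(x)\rangle)$ over $x\in\mathcal K\setminus\{x_c\}$, $\gamma\in(0,1]$, $u=x+\gamma(s-x)$ where $s$ is where the ray from $x$ through $x_c$ meets the relative boundary of $\mathcal K$; $\mu^{int}_{\mathcal L}:=\min\{\inf_{f\in\mathcal F}\mu_f^{x^*},\inf_{g\in\mathcal G}\mu_g^{y^*}\}$. Geometric strong convexity of $f$ on $\mathcal K=\mathrm{conv}(\mathcal A)$: for $x\in\mathcal K$, $\mathcal S_x$ = family of $S\subseteq\mathcal A$ such that $x$ is a convex combination of all elements of $S$ with positive coefficients, $v_S(x)\in\arg\max_{v\in S}\langle\nabla f(x),v\rangle$, $v_f(x)\in\arg\min\{\langle\nabla f(x),v\rangle:v=v_S(x),S\in\mathcal S_x\}$, $s_f(x)\in\arg\min_{v\in\mathcal A}\langle\nabla f(x),v\rangle$, $\gamma^A(x,x'):=\frac{\langle-\nabla f(x),x'-x\rangle}{\langle-\nabla f(x),s_f(x)-v_f(x)\rangle}$, $\mu^A_f:=\inf_{x\in\mathcal K}\inf_{x':\langle\nabla f(x),x'-x\rangle<0}\frac2{\gamma^A(x,x')^2}(f(x')-f(x)-\langle x'-x,\nabla f(x)\rangle)$; $\mu^A_{\mathcal L}:=\min\{\inf_{f\in\mathcal F}\mu^A_f\text{ (over }\mathcal A),\inf_{g\in\mathcal G}\mu^A_g\text{ (over }\mathcal B)\}$. *)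

(* Defs.v *)
From HB Require Import structures.
From mathcomp Require Import all_boot all_order all_algebra.
From mathcomp Require Import finmap.
From mathcomp Require Import all_classical all_reals all_analysis.
Set Implicit Arguments. Unset Strict Implicit. Unset Printing Implicit Defensive.
Import Order.TTheory GRing.Theory Num.Theory.
Import numFieldNormedType.Exports.
Local Open Scope classical_set_scope.
Local Open Scope ring_scope.


Section Defs.
Variable R : realType.

Definition dotp (k : nat) (u v : 'rV[R]_k) : R := \sum_(i < k) u 0 i * v 0 i.
Definition sqnorm (k : nat) (v : 'rV[R]_k) : R := dotp v v.

(* gradient: vector of partial derivatives (directional derivatives along
   the standard basis); for differentiable f it is the usual gradient *)
Definition grad (k : nat) (f : 'rV[R]_k -> R) (x : 'rV[R]_k) : 'rV[R]_k :=
  \row_(i < k) ('D_(delta_mx 0 i) f x).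

Definition strongly_convex_on (k : nat) (K : set 'rV[R]_k) (f : 'rV[R]_k -> R)
    (mu : R) :=
  forall x y (t : R), K x -> K y -> 0 <= t <= 1 ->
    f (t *: x + (1 - t) *: y) <=
      t * f x + (1 - t) * f y - mu / 2 * t * (1 - t) * sqnorm (x - y).

Definition unif_strongly_convex_concave (n m : nat) (X : set 'rV[R]_n)
    (Y : set 'rV[R]_m) (L : 'rV[R]_n -> 'rV[R]_m -> R) :=
  exists muX muY : R, 0 < muX /\ 0 < muY /\
    (forall y, Y y -> strongly_convex_on X (fun x => L x y) muX) /\
    (forall x, X x -> strongly_convex_on Y (fun y => - L x y) muY).

Definition saddle_point (n m : nat) (X : set 'rV[R]_n) (Y : set 'rV[R]_m)
    (L : 'rV[R]_n -> 'rV[R]_m -> R) (xs : 'rV[R]_n) (ys : 'rV[R]_m) :=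
  X xs /\ Y ys /\ forall x y, X x -> Y y -> L xs y <= L xs ys <= L x ys.

Definition rfield (n m : nat) (L : 'rV[R]_n -> 'rV[R]_m -> R)
    (z : 'rV[R]_n * 'rV[R]_m) : 'rV[R]_n * 'rV[R]_m :=
  (grad (fun x => L x z.2) z.1, - grad (fun y => L z.1 y) z.2).

Definition dotp2 (n m : nat) (a b : 'rV[R]_n * 'rV[R]_m) : R :=
  dotp a.1 b.1 + dotp a.2 b.2.

Definition wgap (n m : nat) (L : 'rV[R]_n -> 'rV[R]_m -> R)
    (xs : 'rV[R]_n) (ys : 'rV[R]_m) (z : 'rV[R]_n * 'rV[R]_m) : R :=
  L z.1 ys - L xs z.2.

Definition hgap (n m : nat) (X : set 'rV[R]_n) (Y : set 'rV[R]_m)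
    (L : 'rV[R]_n -> 'rV[R]_m -> R) (z : 'rV[R]_n * 'rV[R]_m) : R :=
  sup [set L z.1 y' | y' in Y] - inf [set L x' z.2 | x' in X].

Definition FW_vertex (n m : nat) (X : set 'rV[R]_n) (Y : set 'rV[R]_m)
    (L : 'rV[R]_n -> 'rV[R]_m -> R) (z s : 'rV[R]_n * 'rV[R]_m) :=
  X s.1 /\ Y s.2 /\
  forall s' : 'rV[R]_n * 'rV[R]_m, X s'.1 -> Y s'.2 ->
    dotp2 s (rfield L z) <= dotp2 s' (rfield L z).

Definition gFW (n m : nat) (L : 'rV[R]_n -> 'rV[R]_m -> R)
    (z s : 'rV[R]_n * 'rV[R]_m) : R := dotp2 (z - s) (rfield L z).

Definition aff_hull (V : lmodType R) (K : set V) : set V :=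
  [set y | exists (k : nat) (p : 'I_k -> V) (c : 'I_k -> R),
     (forall i, K (p i)) /\ \sum_(i < k) c i = 1 /\ y = \sum_(i < k) c i *: p i].

Definition rel_interior (V : normedModType R) (K : set V) : set V :=
  [set x | K x /\ exists e : R, 0 < e /\
     forall y, aff_hull K y -> `|y - x| < e -> K y].

Definition rel_boundary (V : normedModType R) (K : set V) : set V :=
  closure K `\` rel_interior K.

Definition ray_exit (k : nat) (K : set 'rV[R]_k) (x xc s : 'rV[R]_k) :=
  exists t : R, 1 <= t /\ s = x + t *: (xc - x) /\ rel_boundary K s.

Definition mu_int (k : nat) (K : set 'rV[R]_k) (f : 'rV[R]_k -> R)
    (xc : 'rV[R]_k) : \bar R :=
  ereal_inf [set e | exists (x : 'rV[R]_k) (gam : R) (s : 'rV[R]_k),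
     K x /\ x <> xc /\ 0 < gam <= 1 /\ ray_exit K x xc s /\
     e = (2 / gam ^+ 2 *
          (f (x + gam *: (s - x)) - f x -
           dotp ((x + gam *: (s - x)) - x) (grad f x)))%:E].

Definition mu_int_L (n m : nat) (X : set 'rV[R]_n) (Y : set 'rV[R]_m)
    (L : 'rV[R]_n -> 'rV[R]_m -> R) (xs : 'rV[R]_n) (ys : 'rV[R]_m) : \bar R :=
  Order.min (ereal_inf [set mu_int X (fun x => L x y) xs | y in Y])
            (ereal_inf [set mu_int Y (fun y => - L x y) ys | x in X]).

Definition conv_hull (k : nat) (A : {fset 'rV[R]_k}) : set 'rV[R]_k :=
  [set x | exists lam : 'rV[R]_k -> R, (forall v, v \in A -> 0 <= lam v) /\
     \sum_(v <- A) lam v = 1 /\ x = \sum_(v <- A) lam v *: v].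

Definition active_set (k : nat) (A S : {fset 'rV[R]_k}) (x : 'rV[R]_k) :=
  fsubset S A /\ exists lam : 'rV[R]_k -> R, (forall v, v \in S -> 0 < lam v) /\
     \sum_(v <- S) lam v = 1 /\ x = \sum_(v <- S) lam v *: v.

Definition is_sf (k : nat) (A : {fset 'rV[R]_k}) (f : 'rV[R]_k -> R)
    (x s : 'rV[R]_k) :=
  s \in A /\ forall a, a \in A -> dotp (grad f x) s <= dotp (grad f x) a.

Definition is_vS (k : nat) (S : {fset 'rV[R]_k}) (f : 'rV[R]_k -> R)
    (x v : 'rV[R]_k) :=
  v \in S /\ forall a, a \in S -> dotp (grad f x) a <= dotp (grad f x) v.

Definition is_vf (k : nat) (A : {fset 'rV[R]_k}) (f : 'rV[R]_k -> R)
    (x v : 'rV[R]_k) :=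
  (exists S, active_set A S x /\ is_vS S f x v) /\
  forall S v', active_set A S x -> is_vS S f x v' ->
    dotp (grad f x) v <= dotp (grad f x) v'.

Definition mu_geom (k : nat) (A : {fset 'rV[R]_k}) (f : 'rV[R]_k -> R) : \bar R :=
  ereal_inf [set e | exists (x x' s v : 'rV[R]_k) (gam : R),
     conv_hull A x /\ conv_hull A x' /\ dotp (grad f x) (x' - x) < 0 /\
     is_sf A f x s /\ is_vf A f x v /\
     gam = dotp (- grad f x) (x' - x) / dotp (- grad f x) (s - v) /\
     e = (2 / gam ^+ 2 * (f x' - f x - dotp (x' - x) (grad f x)))%:E].

Definition mu_geom_L (n m : nat) (A : {fset 'rV[R]_n}) (B : {fset 'rV[R]_m})
    (X : set 'rV[R]_n) (Y : set 'rV[R]_m)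
    (L : 'rV[R]_n -> 'rV[R]_m -> R) : \bar R :=
  Order.min (ereal_inf [set mu_geom A (fun x => L x y) | y in Y])
            (ereal_inf [set mu_geom B (fun y => - L x y) | x in X]).

Definition PFW_away (n m : nat) (Sx : {fset 'rV[R]_n}) (Sy : {fset 'rV[R]_m})
    (L : 'rV[R]_n -> 'rV[R]_m -> R) (z v : 'rV[R]_n * 'rV[R]_m) :=
  v.1 \in Sx /\ v.2 \in Sy /\
  forall v' : 'rV[R]_n * 'rV[R]_m, v'.1 \in Sx -> v'.2 \in Sy ->
    dotp2 v' (rfield L z) <= dotp2 v (rfield L z).

Definition gPFW (n m : nat) (L : 'rV[R]_n -> 'rV[R]_m -> R)
    (z v s : 'rV[R]_n * 'rV[R]_m) : R := dotp2 (v - s) (rfield L z).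

End Defs.

(* Main.v *)
Set Warnings "-notation-overridden,-notation-incompatible-prefix,-ambiguous-paths,-deprecated".
Require Import Defs.
From HB Require Import structures.
From mathcomp Require Import all_boot all_order all_algebra.
From mathcomp Require Import finmap.
From mathcomp Require Import all_classical all_reals all_analysis.
From mathcomp Require Import ring lra.
Import Order.TTheory GRing.Theory Num.Theory.
Import numFieldNormedType.Exports.
Local Open Scope classical_set_scope.
Local Open Scope ring_scope.
Section H.
Variable R : realType.

Lemma dotpDl k (a b c : 'rV[R]_k) : dotp (a + b) c = dotp a c + dotp b c.
Proof. by rewrite /dotp -big_split; apply: eq_bigr => i _; rewrite !mxE mulrDl. Qed.
Lemma dotpZl k (t : R) (a c : 'rV[R]_k) : dotp (t *: a) c = t * dotp a c.
Proof. by rewrite /dotp mulr_sumr; apply: eq_bigr => i _; rewrite !mxE mulrA. Qed.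
Lemma dotpNl k (a c : 'rV[R]_k) : dotp (- a) c = - dotp a c.
Proof. by rewrite -scaleN1r dotpZl mulN1r. Qed.
Lemma dotpBl k (a b c : 'rV[R]_k) : dotp (a - b) c = dotp a c - dotp b c.
Proof. by rewrite dotpDl dotpNl. Qed.
Lemma dotpC k (a c : 'rV[R]_k) : dotp a c = dotp c a.
Proof. by apply: eq_bigr => i _; rewrite mulrC. Qed.
Lemma dotp0l k (c : 'rV[R]_k) : dotp 0 c = 0.
Proof. by rewrite -(scale0r (0 : 'rV[R]_k)) dotpZl mul0r. Qed.
Lemma dotpNr k (a c : 'rV[R]_k) : dotp a (- c) = - dotp a c.
Proof. by rewrite dotpC dotpNl dotpC. Qed.
Lemma dotpBr k (a b c : 'rV[R]_k) : dotp c (a - b) = dotp c a - dotp c b.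
Proof. by rewrite dotpC dotpBl !(dotpC _ c). Qed.
Lemma sqnorm_ge0 k (a : 'rV[R]_k) : 0 <= sqnorm a.
Proof. by apply: sumr_ge0 => i _; rewrite -expr2 sqr_ge0. Qed.

Lemma grad_dir k (f : 'rV[R]_k -> R) x d : differentiable f x ->
  'D_d f x = dotp d (grad f x).
Proof.
move=> df; rewrite deriveE // {1}(row_sum_delta d) linear_sum /dotp.
apply: eq_bigr => i _; rewrite linearZ /= mxE -deriveE //.
Qed.

Lemma gradN k (f : 'rV[R]_k -> R) x : differentiable f x ->
  grad (fun y => - f y) x = - grad f x.
Proof.
move=> df; apply/rowP => i; rewrite !mxE.
exact: (@deriveN _ _ _ f x _ (diff_derivable df)).
Qed.

Lemma fo_convex k (f : 'rV[R]_k -> R) x x' : differentiable f x ->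
  (forall t, 0 < t <= 1 -> f (t *: (x' - x) + x) <= f x + t * (f x' - f x)) ->
  dotp (x' - x) (grad f x) <= f x' - f x.
Proof.
move=> df hc; rewrite -grad_dir //.
have hcv : derivable f x (x' - x) := diff_derivable df.
rewrite /derive.
set g := (fun h : R => h^-1 *: ((f \o shift x) (h *: (x' - x)) - f x)).
have hr : g @ 0^'+ --> lim (g @ 0^').
  move=> A /hcv /nbhs_ballP [_ /posnumP[e] xe_A].
  by exists e%:num => //= y xe_y; rewrite lt_def => /andP [xney _]; apply: xe_A.
apply: (cvgr_to_le hr).
near=> h.
have h0 : 0 < h by near: h; exact: nbhs_right_gt.
have h1 : h <= 1 by near: h; exact: nbhs_right_le.
rewrite /g /= -[_ *: _]/(_ * _).
have := hc h (andb_true_intro (conj h0 h1)).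
move=> hle.
have : h^-1 * (f (h *: (x' - x) + x) - f x) <= h^-1 * (h * (f x' - f x)).
  rewrite ler_pM2l ?invr_gt0 //.
  lra.
by rewrite mulrA mulVf ?gt_eqF // mul1r.
Unshelve. all: by end_near. Qed.
Lemma ray_ex k (K : set 'rV[R]_k) x xc : compact K -> K x -> K xc -> x != xc ->
  exists t s, 1 <= t /\ s = x + t *: (xc - x) /\ rel_boundary K s /\ K s.
Proof.
move=> cK Kx Kxc xnxc.
have clK : closed K := compact_closed (@norm_hausdorff _ _) cK.
have [B [_ HB]] := compact_bounded cK.
have HB1 : forall z, K z -> `|z| <= B + 1 by move=> z Kz; apply: (HB (B + 1)) => //; rewrite ltrDl.
set d := xc - x.
have d0 : 0 < `|d| by rewrite normr_gt0 subr_eq0 eq_sym.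
set T := [set t : R | 0 <= t /\ K (x + t *: d)].
have T1 : T 1 by split => //; rewrite scale1r /d addrC subrK.
have ubT : ubound T ((B + 1 + `|x|) / `|d|).
  move=> t [t0 Kt]; rewrite ler_pdivlMr //.
  have := HB1 _ Kt.
  have : `|t *: d| <= `|x + t *: d| + `|x|.
    by rewrite -{1}(addKr x (t *: d)) addrC; apply: (le_trans (ler_normD _ _)); rewrite normrN addrC.
  rewrite normrZ ger0_norm //; lra.
have hsT : has_sup T by split; [exists 1 | exists ((B + 1 + `|x|) / `|d|)].
set ts := sup T.
have ts1 : 1 <= ts by apply: ub_le_sup => //; exists ((B + 1 + `|x|) / `|d|).
have clo : closure K (x + ts *: d).
  move=> A /nbhs_ballP [e e0 heA].
  have [t Tt tlt] := sup_adherent (divr_gt0 e0 d0) hsT.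
  have tle : t <= ts by apply: ub_le_sup => //; exists ((B + 1 + `|x|) / `|d|).
  exists (x + t *: d); split; first exact: Tt.2.
  apply: heA; rewrite -ball_normE /ball_ /=.
  rewrite opprD addrA [x + _]addrC addrK -scalerBl normrZ ger0_norm ?subr_ge0 //.
  by rewrite -ltr_pdivlMr // ltrBlDl addrC -ltrBlDl.
have Ks : K (x + ts *: d) by rewrite (closure_id K).1.
exists ts, (x + ts *: d); split => //; split => //; split => //. split => //.
move=> [_ [e [e0 he]]].
set del := e / (2 * `|d|).
have del0 : 0 < del by rewrite divr_gt0 // mulr_gt0.
have Tt : T (ts + del).
  split; first by apply: addr_ge0 => //; [lra | exact: ltW].
  apply: he.
    exists 2, (fun i : 'I_2 => if i == ord0 then x else xc),
      (fun i : 'I_2 => if i == ord0 then 1 - (ts + del) else ts + del).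
    split; first by move=> i; case: ifP.
    split; first by rewrite big_ord_recr big_ord1 /=; ring.
    rewrite big_ord_recr big_ord1 /= /d scalerBr scalerBl scale1r.
    by rewrite addrA addrAC.
  rewrite opprD addrA [x + _]addrC addrK -scalerBl (addrC ts) addrK.
  rewrite normrZ gtr0_norm // /del.
  have -> : e / (2 * `|d|) * `|d| = e / 2 by field; rewrite gt_eqF.
  lra.
have := ub_le_sup (hsT.2) Tt; rewrite -/ts; lra.
Qed.

Lemma quad (g D M : R) : 0 < M -> g * D - g^+2 * M / 2 <= D^+2 / (2 * M).
Proof.
move=> M0.
have -> : D^+2 / (2 * M) = g * D - g^+2 * M / 2 + (D - g * M)^+2 / (2 * M).
  by field; rewrite gt_eqF.
by rewrite lerDl divr_ge0 ?sqr_ge0 // mulr_ge0 // ltW.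
Qed.

Lemma sideI_elem k (K : set 'rV[R]_k) f x xc G : compact K -> K x -> K xc ->
  x != xc ->
  (forall s', K s' -> dotp (x - s') (grad f x) <= G) ->
  exists e gam, (mu_int K f xc <= e%:E)%E /\ 0 < gam /\
    f x - f xc <= gam * G - gam^+2 * e / 2.
Proof.
move=> cK Kx Kxc xnxc hG.
have [t [s [t1 [hs [rb Ks]]]]] := ray_ex _ _ _ _ cK Kx Kxc xnxc.
have t0 : 0 < t by lra.
set gam := t^-1.
have g0 : 0 < gam by rewrite invr_gt0.
have hu : x + gam *: (s - x) = xc.
  by rewrite hs addrAC subrr add0r scalerA mulVf ?gt_eqF // scale1r addrC subrK.
set e := 2 / gam ^+ 2 * (f (x + gam *: (s - x)) - f x -
           dotp ((x + gam *: (s - x)) - x) (grad f x)).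
exists e, gam; split.
  apply: ereal_inf_lbound; exists x, gam, s; split => //; split.
    by move=> h; move: xnxc; rewrite h eqxx.
  split; first by rewrite g0 /= invf_le1.
  by split => //; exists t.
split => //.
have hD : dotp ((x + gam *: (s - x)) - x) (grad f x) =
   gam * (dotp s (grad f x) - dotp x (grad f x)).
  by rewrite addrAC subrr add0r dotpZl dotpBl.
have hGs := hG _ Ks; rewrite dotpBl in hGs.
have he : gam ^+ 2 * e / 2 = f xc - f x - gam * (dotp s (grad f x) - dotp x (grad f x)).
  by rewrite /e hD hu; field; rewrite gt_eqF.
rewrite he.
have : 0 <= gam * (G + (dotp s (grad f x) - dotp x (grad f x))).
  by rewrite mulr_ge0 ?(ltW g0) //; lra.
lra.
Qed.

Lemma sideI k (K : set 'rV[R]_k) f x xc G (M : R) : compact K -> K x -> K xc ->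
  (forall s', K s' -> dotp (x - s') (grad f x) <= G) ->
  0 < M -> (M%:E <= mu_int K f xc)%E ->
  f x - f xc <= G^+2 / (2 * M).
Proof.
move=> cK Kx Kxc hG M0 hM.
have [/eqP <-|xnxc] := boolP (x == xc).
  by rewrite subrr divr_ge0 ?sqr_ge0 // mulr_ge0 // ltW.
have [e [gam [he [g0 hb]]]] := sideI_elem _ _ _ _ _ _ cK Kx Kxc xnxc hG.
have Me : M <= e by rewrite -lee_fin (le_trans hM he).
apply: (le_trans hb); apply: (le_trans _ (quad gam G M M0)).
have : 0 <= gam ^+ 2 by rewrite sqr_ge0.
nra.
Qed.

Lemma argmin_seq (T : eqType) (s : seq T) (P : T -> Prop) (g : T -> R) :
  (exists a, a \in s /\ P a) ->
  exists a, a \in s /\ P a /\ forall b, b \in s -> P b -> g a <= g b.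
Proof.
elim: s => [|c s IH] [a [ain Pa]]; first by rewrite in_nil in ain.
case: (pselect (exists a, a \in s /\ P a)) => [hex|hno].
  have [a0 [a0in [Pa0 ha0]]] := IH hex.
  case: (pselect (P c /\ g c < g a0)) => [[Pc lt]|hn].
    exists c; split; first by rewrite mem_head.
    split => // b; rewrite in_cons => /orP[/eqP->|bin] Pb //.
    exact: le_trans (ltW lt) (ha0 _ bin Pb).
  exists a0; split; first by rewrite in_cons a0in orbT.
  split => // b; rewrite in_cons => /orP[/eqP->|bin] Pb; last exact: ha0.
  by rewrite leNgt; apply/negP => lt; apply: hn.
have Pc : P c.
  move: ain; rewrite in_cons => /orP[/eqP<-//|ain].
  by exfalso; apply: hno; exists a.
exists c; split; first exact: mem_head.
split => // b; rewrite in_cons => /orP[/eqP->//|bin] Pb.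
by exfalso; apply: hno; exists b.
Qed.

Lemma atom_hull k (A : {fset 'rV[R]_k}) a : a \in A -> conv_hull A a.
Proof.
move=> aA; exists (fun v => (v == a)%:R); split; first by move=> v _; rewrite ler0n.
have hr : forall v, v \in rem a A -> v != a.
  by move=> v; rewrite rem_filter ?fset_uniq // mem_filter => /andP[].
split.
  rewrite (big_rem a) //= eqxx big1_seq ?addr0 // => v /andP[_ /hr /negbTE->] //.
rewrite (big_rem a) //= eqxx scale1r big1_seq ?addr0 // => v /andP[_ /hr /negbTE->].
by rewrite scale0r.
Qed.

Lemma fo_sc k (K : set 'rV[R]_k) f mu x x' : 0 < mu -> strongly_convex_on K f mu ->
  K x -> K x' -> differentiable f x -> dotp (x' - x) (grad f x) <= f x' - f x.
Proof.
move=> mu0 sc Kx Kx' df; apply: fo_convex => // t /andP[t0 t1].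
have := sc x' x t Kx' Kx; rewrite (ltW t0) t1 => /(_ isT).
have -> : t *: x' + (1 - t) *: x = t *: (x' - x) + x.
  by apply/rowP => i; rewrite !mxE; ring.
have : 0 <= mu / 2 * t * (1 - t) * sqnorm (x' - x).
  by rewrite !mulr_ge0 ?sqnorm_ge0 ?subr_ge0 // ltW // divr_gt0.
lra.
Qed.

Lemma sideP k (A S : {fset 'rV[R]_k}) f mu x vv ss (M : \bar R) :
  0 < mu -> strongly_convex_on (conv_hull A) f mu -> differentiable f x ->
  conv_hull A x -> active_set A S x -> vv \in S ->
  (forall a, a \in S -> dotp a (grad f x) <= dotp vv (grad f x)) ->
  (forall a, conv_hull A a -> dotp ss (grad f x) <= dotp a (grad f x)) ->
  (0 < M)%E -> (M <= mu_geom A f)%E ->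
  0 <= dotp (vv - ss) (grad f x) /\
  forall x', conv_hull A x' ->
    (M = +oo%E -> f x <= f x') /\
    (forall Mr, M = Mr%:E ->
       f x - f x' <= (dotp (vv - ss) (grad f x))^+2 / (2 * Mr)).
Proof.
move=> mu0 sc df hx aS vvS hvv hss M0 hM.
set r := grad f x.
have SA : forall a, a \in S -> a \in A by move=> a; apply/fsubsetP; case: aS.
have [s0 [s0A [_ hs0]]] : exists a, a \in (A : seq _) /\ True /\
    forall b, b \in (A : seq _) -> True -> dotp a r <= dotp b r.
  by apply: argmin_seq; exists vv; split => //; apply: SA.
have vvP : exists S', active_set A S' x /\ is_vS S' f x vv.
  exists S; split => //; split => // a ha; rewrite !(dotpC _ r); exact: hvv.
have [v0 [v0A [[S0 [aS0 vS0]] hv0]]] : exists a, a \in (A : seq _) /\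
    (exists S', active_set A S' x /\ is_vS S' f x a) /\
    forall b, b \in (A : seq _) -> (exists S', active_set A S' x /\ is_vS S' f x b) ->
      dotp a r <= dotp b r.
  by apply: argmin_seq; exists vv; split => //; apply: SA.
have isf : is_sf A f x s0.
  by split => // a aA; rewrite !(dotpC _ r); apply: hs0.
have ivf : is_vf A f x v0.
  split; first by exists S0.
  move=> S' v' aS' [v'S hv'].
  have v'A : v' \in A by apply/fsubsetP: v'S; case: aS'.
  rewrite !(dotpC _ r); apply: hv0 => //; exists S'; split => //.
have hvS : dotp v0 r <= dotp vv r.
  rewrite !(dotpC _ _ r); apply: (ivf.2 S vv aS); split => // a ha; rewrite !(dotpC _ r); exact: hvv.
have hsS : dotp ss r <= dotp s0 r by apply: hss; apply: atom_hull.
have hD0 : dotp s0 r <= dotp v0 r by apply: hs0.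
have hG0 : 0 <= dotp (vv - ss) r by rewrite dotpBl; lra.
split => // x' hx'.
have hGD : dotp (v0 - s0) r <= dotp (vv - ss) r by rewrite !dotpBl; lra.
have hD : 0 <= dotp (v0 - s0) r by rewrite dotpBl; lra.
case: (lerP 0 (dotp r (x' - x))) => hdir.
  have := fo_sc _ _ _ _ _ _ mu0 sc hx hx' df; rewrite -/r (dotpC _ _ r) => hfo.
  have fxx : f x <= f x' by lra.
  split => // Mr hMr.
  have Mr0 : 0 < Mr by rewrite -lte_fin -hMr.
  have : 0 <= dotp (vv - ss) r ^+ 2 / (2 * Mr) by rewrite divr_ge0 ?sqr_ge0 // mulr_ge0 // ltW.
  lra.
set gam := dotp (- r) (x' - x) / dotp (- r) (s0 - v0).
set e := 2 / gam ^+ 2 * (f x' - f x - dotp (x' - x) r).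
have hme : (mu_geom A f <= e%:E)%E.
  apply: ereal_inf_lbound; exists x, x', s0, v0, gam.
  by do !split => //.
have hMe := le_trans hM hme.
split.
  by move=> hMi; rewrite hMi leye_eq in hMe.
move=> Mr hMr; rewrite hMr lee_fin in hMe.
have Mr0 : 0 < Mr by rewrite -lte_fin -hMr.
set D := dotp (v0 - s0) r.
have hD' : dotp (- r) (s0 - v0) = D.
  by rewrite /D dotpNl !dotpBr !dotpBl !(dotpC _ r); ring.
have ha : dotp (- r) (x' - x) = - dotp (x' - x) r by rewrite dotpNl dotpC.
have hdir' : dotp (x' - x) r < 0 by rewrite dotpC.
have [D0|Dpos] := eqVneq D 0.
  exfalso; move: hMe; rewrite /e /gam hD' D0 invr0 mulr0 expr0n /= invr0 mulr0 mul0r.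
  lra.
have Dp : 0 < D by rewrite lt_def Dpos hD.
have g0 : 0 < gam by rewrite /gam hD' ha divr_gt0 // oppr_gt0.
have he : gam ^+ 2 * e / 2 = f x' - f x - dotp (x' - x) r.
  by rewrite /e; field; rewrite gt_eqF.
have hgD : dotp (x' - x) r = - (gam * D).
  by rewrite /gam hD' ha; field; rewrite gt_eqF.
have h1 : f x - f x' <= gam * D - gam ^+ 2 * Mr / 2.
  have : 0 <= gam ^+ 2 by rewrite sqr_ge0.
  nra.
apply: (le_trans h1); apply: (le_trans (quad gam D Mr Mr0)).
apply: ler_wpM2r; first by rewrite invr_ge0 mulr_ge0 // ltW.
by rewrite !expr2; apply: ler_pM.
Qed.

Lemma diff_p1 n m (L : 'rV[R]_n -> 'rV[R]_m -> R) x y :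
  differentiable (fun p : 'rV[R]_n * 'rV[R]_m => L p.1 p.2) (x, y) ->
  differentiable (fun x0 => L x0 y) x.
Proof.
move=> d.
have -> : (fun x0 => L x0 y) =
  (fun p : 'rV[R]_n * 'rV[R]_m => L p.1 p.2) \o (fun x0 => (x0, y)) by [].
apply: differentiable_comp => //.
Qed.

Lemma diff_p2 n m (L : 'rV[R]_n -> 'rV[R]_m -> R) x y :
  differentiable (fun p : 'rV[R]_n * 'rV[R]_m => L p.1 p.2) (x, y) ->
  differentiable (fun y0 => L x y0) y.
Proof.
move=> d.
have -> : (fun y0 => L x y0) =
  (fun p : 'rV[R]_n * 'rV[R]_m => L p.1 p.2) \o (fun y0 => (x, y0)) by [].
apply: differentiable_comp => //.
Qed.

Lemma rhs_fin (a Mr : R) : 0 < Mr -> (a%:E / (2%:E * Mr%:E) = (a / (2 * Mr))%:E)%E.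
Proof. by move=> M0; rewrite -EFinM inver gt_eqF ?mulr_gt0 // -EFinM. Qed.

Lemma rhs_inf (a : R) : (a%:E / (2%:E * +oo) = 0)%E.
Proof. by rewrite mulry gtr0_sg // mul1e invey mule0. Qed.

Lemma sq_sum (a b M : R) : 0 <= a -> 0 <= b -> 0 < M ->
  a^+2 / (2 * M) + b^+2 / (2 * M) <= (a + b)^+2 / (2 * M).
Proof.
move=> a0 b0 M0; rewrite -mulrDl; apply: ler_wpM2r; first by rewrite invr_ge0 mulr_ge0 // ltW.
have : 0 <= a * b by rewrite mulr_ge0.
rewrite !expr2; lra.
Qed.
End H.
Arguments diff_p1 {R n m L x y}.
Arguments diff_p2 {R n m L x y}.
Arguments gradN {R k f x}.
Arguments sideI {R k K f x xc G M}.
Arguments sideI_elem {R k K f x xc G}.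
Arguments sideP {R k A S f mu x vv ss M}.
Arguments sq_sum {R a b M}.

Theorem lemma19 (R : realType) (n m : nat)
  (X : set 'rV[R]_n) (Y : set 'rV[R]_m) (L : 'rV[R]_n -> 'rV[R]_m -> R)
  (xs : 'rV[R]_n) (ys : 'rV[R]_m) :
  X !=set0 -> Y !=set0 -> convex_set X -> convex_set Y ->
  compact X -> compact Y ->
  (forall x y, X x -> Y y ->
     differentiable (fun p : 'rV[R]_n * 'rV[R]_m => L p.1 p.2) (x, y)) ->
  unif_strongly_convex_concave X Y L ->
  saddle_point X Y L xs ys ->
  forall (x : 'rV[R]_n) (y : 'rV[R]_m), X x -> Y y ->
  (* (I) *)
  (rel_interior (X `*` Y) (xs, ys) -> (0 < mu_int_L X Y L xs ys)%E ->
   forall s : 'rV[R]_n * 'rV[R]_m, FW_vertex X Y L (x, y) s ->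
   ((wgap L xs ys (x, y))%:E <=
      ((gFW L (x, y) s) ^+ 2)%:E / (2%:E * mu_int_L X Y L xs ys))%E)
  /\
  (* (P) *)
  (forall (A : {fset 'rV[R]_n}) (B : {fset 'rV[R]_m}),
   X = conv_hull A -> Y = conv_hull B -> (0 < mu_geom_L A B X Y L)%E ->
   forall (Sx : {fset 'rV[R]_n}) (Sy : {fset 'rV[R]_m}),
   active_set A Sx x -> active_set B Sy y ->
   forall v s : 'rV[R]_n * 'rV[R]_m,
   PFW_away Sx Sy L (x, y) v -> FW_vertex X Y L (x, y) s ->
   wgap L xs ys (x, y) <= hgap X Y L (x, y) /\
   ((hgap X Y L (x, y))%:E <=
      ((gPFW L (x, y) v s) ^+ 2)%:E / (2%:E * mu_geom_L A B X Y L))%E).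
Proof.
move=> X0 Y0 cvX cvY cX cY dL [muX [muY [mX0 [mY0 [scX scY]]]]] [Xxs [Yys hsp]]
  x y Xx Yy.
have dx := diff_p1 (dL x y Xx Yy).
have dy := diff_p2 (dL x y Xx Yy).
have hr2 : grad (fun y0 => (- L x y0)%R) y = - grad (fun y0 => L x y0) y := gradN dy.
set r1 := grad (fun x0 => L x0 y) x.
set r2 := grad (fun y0 => (- L x y0)%R) y.
have hr : rfield L (x, y) = (r1, r2) by rewrite /rfield /= /r2 hr2.
have FWs : forall s, FW_vertex X Y L (x, y) s ->
    (forall a, X a -> dotp s.1 r1 <= dotp a r1) /\
    (forall a, Y a -> dotp s.2 r2 <= dotp a r2).
  move=> s [Xs1 [Ys2 hs]]; rewrite hr in hs; split => a Ha.
    by have := hs (a, s.2) Ha Ys2; rewrite /dotp2 /=; lra.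
  by have := hs (s.1, a) Xs1 Ha; rewrite /dotp2 /=; lra.
split.
  move=> _ hmu s hFW.
  have [hs1 hs2] := FWs s hFW.
  set Gx := dotp (x - s.1) r1.
  set Gy := dotp (y - s.2) r2.
  have hGx : forall s', X s' -> dotp (x - s') r1 <= Gx.
    by move=> s' Hs'; rewrite /Gx !dotpBl; have := hs1 s' Hs'; lra.
  have hGy : forall s', Y s' -> dotp (y - s') r2 <= Gy.
    by move=> s' Hs'; rewrite /Gy !dotpBl; have := hs2 s' Hs'; lra.
  have Gx0 : 0 <= Gx by have := hGx x Xx; rewrite subrr dotp0l.
  have Gy0 : 0 <= Gy by have := hGy y Yy; rewrite subrr dotp0l.
  have hg : gFW L (x, y) s = Gx + Gy by rewrite /gFW hr /dotp2.
  have := le_refl (mu_int_L X Y L xs ys); rewrite {2}/mu_int_L le_min => /andP[hm1 hm2].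
  have hmx : (mu_int_L X Y L xs ys <= mu_int X (fun x0 => L x0 y) xs)%E.
    by apply: le_trans hm1 _; apply: ereal_inf_lbound; exists y.
  have hmy : (mu_int_L X Y L xs ys <= mu_int Y (fun y0 => (- L x y0)%R) ys)%E.
    by apply: le_trans hm2 _; apply: ereal_inf_lbound; exists x.
  move: hmu hmx hmy; case: (mu_int_L X Y L xs ys) => [Mr| |] hmu hmx hmy //.
    have Mr0 : 0 < Mr by rewrite -lte_fin.
    have bx := sideI (f := fun x0 => L x0 y) cX Xx Xxs hGx Mr0 hmx.
    have byy := sideI (f := fun y0 => - L x y0) cY Yy Yys hGy Mr0 hmy.
    rewrite rhs_fin // lee_fin /wgap /= hg.
    have := sq_sum Gx0 Gy0 Mr0.
    move: bx byy => /= bx byy.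
    clearbody Gx Gy r1 r2.
    lra.
  have xe : x = xs.
    apply/eqP; apply/negP => /negP xn.
    have [e [gam [he _]]] := sideI_elem (f := fun x0 => L x0 y) cX Xx Xxs xn hGx.
    by have := le_trans hmx he.
  have ye : y = ys.
    apply/eqP; apply/negP => /negP yn.
    have [e [gam [he _]]] := sideI_elem (f := fun y0 => - L x y0) cY Yy Yys yn hGy.
    by have := le_trans hmy he.
  by rewrite rhs_inf /wgap /= xe ye subrr.
move=> A B hX hY hmu Sx Sy aSx aSy v s [v1S [v2S hv]] hFW.
have [hs1 hs2] := FWs s hFW.
rewrite hr in hv.
have hv1 : forall a, a \in Sx -> dotp a r1 <= dotp v.1 r1.
  by move=> a Ha; have := hv (a, v.2) Ha v2S; rewrite /dotp2 /=; lra.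
have hv2 : forall a, a \in Sy -> dotp a r2 <= dotp v.2 r2.
  by move=> a Ha; have := hv (v.1, a) v1S Ha; rewrite /dotp2 /=; lra.
have := le_refl (mu_geom_L A B X Y L); rewrite {2}/mu_geom_L le_min => /andP[hm1 hm2].
have hmx : (mu_geom_L A B X Y L <= mu_geom A (fun x0 => L x0 y))%E.
  by apply: le_trans hm1 _; apply: ereal_inf_lbound; exists y.
have hmy : (mu_geom_L A B X Y L <= mu_geom B (fun y0 => (- L x y0)%R))%E.
  by apply: le_trans hm2 _; apply: ereal_inf_lbound; exists x.
have key : forall Bx By, (forall x', X x' -> L x y - L x' y <= Bx) ->
    (forall y', Y y' -> L x y' - L x y <= By) ->
    wgap L xs ys (x, y) <= hgap X Y L (x, y) /\ hgap X Y L (x, y) <= Bx + By.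
  move=> Bx By hbx hby; rewrite /wgap /hgap /=.
  have hlb : lbound [set L x' y | x' in X] (L x y - Bx).
    by move=> _ [x' Xx' <-]; have := hbx x' Xx'; lra.
  have hub : ubound [set L x y' | y' in Y] (L x y + By).
    by move=> _ [y' Yy' <-]; have := hby y' Yy'; lra.
  have i1 : L x y - Bx <= inf [set L x' y | x' in X].
    by apply: lb_le_inf => //; exists (L x y); exists x.
  have s1 : sup [set L x y' | y' in Y] <= L x y + By.
    by apply: ge_sup => //; exists (L x y); exists y.
  have s2 : L x ys <= sup [set L x y' | y' in Y].
    by apply: ub_le_sup; [exists (L x y + By) | exists ys].
  have i2 : inf [set L x' y | x' in X] <= L xs y.
    by apply: ge_inf; [exists (L x y - Bx) | exists xs].
  split; lra.
move: hmu hmx hmy; set M := mu_geom_L A B X Y L; clearbody M => hmu hmx hmy.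
have dny : differentiable (fun y0 => (- L x y0)%R) y by exact: differentiableN.
subst X Y.
have [Gx0 bx] := sideP mX0 (scX y Yy) dx Xx aSx v1S hv1 hs1 hmu hmx.
have [Gy0 byy] := sideP mY0 (scY x Xx) dny Yy aSy v2S hv2 hs2 hmu hmy.
have hg : gPFW L (x, y) v s = dotp (v.1 - s.1) r1 + dotp (v.2 - s.2) r2.
  by rewrite /gPFW hr /dotp2.
rewrite hg.
move: hmu hmx hmy bx byy; case: M => [Mr| |] hmu hmx hmy bx byy //.
  have Mr0 : 0 < Mr by rewrite -lte_fin.
  have hbx : forall x', conv_hull A x' -> L x y - L x' y <= dotp (v.1 - s.1) r1 ^+ 2 / (2 * Mr).
    by move=> x' Hx'; exact: ((bx x' Hx').2 Mr erefl).
  have hby : forall y', conv_hull B y' -> L x y' - L x y <= dotp (v.2 - s.2) r2 ^+ 2 / (2 * Mr).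
    move=> y' Hy'; have := (byy y' Hy').2 Mr erefl.
    by rewrite opprK addrC.
  have [h1 h2] := key _ _ hbx hby.
  split => //; rewrite rhs_fin // lee_fin.
  have := @sq_sum R (dotp (v.1 - s.1) r1) (dotp (v.2 - s.2) r2) Mr Gx0 Gy0 Mr0.
  clearbody r1 r2.
  move: h2; generalize (hgap (conv_hull A) (conv_hull B) L (x, y)) => h.
  lra.
have hbx : forall x', conv_hull A x' -> L x y - L x' y <= 0.
  by move=> x' Hx'; have := (bx x' Hx').1 erefl; rewrite subr_le0.
have hby : forall y', conv_hull B y' -> L x y' - L x y <= 0.
  by move=> y' Hy'; have := (byy y' Hy').1 erefl; rewrite lerN2 subr_le0.
have [h1 h2] := key _ _ hbx hby.
by split => //; rewrite rhs_inf lee_fin; rewrite addr0 in h2.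
Qed.
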